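(* Let $p\ge3$ be an integer. For each integer $k\ge1$ and each $1\le j\le k$, let $a_j=a_j(k)$ denote the smallest positive root of $g_j(\alpha)=j\alpha^{p-1}-(k-j+1)-(j-1)(1+\alpha)^{p-1}$. Then $\displaystyle\lim_{k\to\infty}\sum_{j=1}^k\frac1{a_j(k)}=\infty$. *)

(* Defs.v *)
From Stdlib Require Import Reals Lra Lia.
Open Scope R_scope.

Definition g (p k j : nat) (alpha : R) : R :=
  INR j * alpha ^ (p - 1) - INR (k - j + 1) - INR (j - 1) * (1 + alpha) ^ (p - 1).

Definition is_smallest_pos_root (f : R -> R) (a : R) : Prop :=
  0 < a /\ f a = 0 /\ (forall b, 0 < b -> f b = 0 -> a <= b).

Fixpoint sum_1_to (f : nat -> R) (k : nat) : R :=
  match k with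
  | O => 0
  | S k' => sum_1_to f k' + f (S k')
  end.

(* Main.v *)
Require Import Defs.
From Stdlib Require Import Reals Lra Lia.
Open Scope R_scope.

Lemma poly_bound (n : nat) (x : R) : 0 < x -> (x+1)^n * (x - INR n) <= x^(S n).
Proof.
  intro Hx. induction n as [|n IH].
  - simpl. lra.
  - rewrite S_INR.
    destruct (Rle_dec (x - (INR n + 1)) 0) as [H|H].
    + assert (0 <= (x+1)^(S n)) by (apply pow_le; lra).
      assert (0 <= x^(S (S n))) by (apply pow_le; lra).
      nra.
    + assert (Hpos : 0 < x - INR n) by lra.
      assert (0 <= (x+1)^n) by (apply pow_le; lra).
      change ((x+1)^(S n)) with ((x+1)*(x+1)^n).
      change (x^(S (S n))) with (x * x^(S n)).
      pose proof (pos_INR n).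
      assert ((x+1)*(x - (INR n + 1)) <= x * (x - INR n)) by nra.
      assert (H3 : (x+1)^n * ((x+1)*(x - (INR n + 1))) <= (x+1)^n * (x * (x - INR n)))
        by (apply Rmult_le_compat_l; lra).
      assert (H4 : (x+1)^n * (x - INR n) * x <= x^(S n) * x) by (apply Rmult_le_compat_r; lra).
      nra.
Qed.

Lemma ln_step (n : R) : 0 < n -> ln (n+1) - ln n <= / n.
Proof.
  intro Hn.
  assert (Hi : 0 < /n) by (apply Rinv_0_lt_compat; lra).
  pose proof (exp_ineq1 (/n) ltac:(lra)).
  assert (Heq : n+1 = n * (1 + /n)) by (field; lra).
  rewrite Heq, ln_mult by lra.
  assert (ln (1 + /n) < ln (exp (/n))) by (apply ln_increasing; lra).
  rewrite ln_exp in H0. lra.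
Qed.

Lemma cont_g p k j : continuity (g p k j).
Proof.
  unfold g. reg.
Qed.

Lemma root_bound p k j a : (3 <= p)%nat -> (1 <= j <= k)%nat -> (k < j * j)%nat ->
  is_smallest_pos_root (g p k j) a -> a <= 2 * INR (p-1) * INR j.
Proof.
  intros Hp Hj Hjk [Ha [Hga Hmin]].
  set (q := (p-1)%nat) in *.
  assert (Hq : 2 <= INR q) by (replace 2 with (INR 2) by (simpl; lra); apply le_INR; lia).
  assert (HjR : 1 <= INR j) by (replace 1 with (INR 1) by (simpl; lra); apply le_INR; lia).
  assert (HkR : INR k < INR j * INR j) by (rewrite <- mult_INR; apply lt_INR; lia).
  assert (Hk1 : INR (k - j + 1) <= INR k) by (apply le_INR; lia).
  assert (Hk2 : 1 <= INR (k - j + 1)) by (replace 1 with (INR 1) by (simpl; lra); apply le_INR; lia).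
  assert (Hj1 : INR (j - 1) = INR j - 1) by (rewrite minus_INR by lia; simpl; lra).
  set (al := 2 * INR q * INR j).
  assert (Hal : 4 <= al) by (unfold al; nra).
  assert (G0 : g p k j 0 < 0).
  { unfold g. fold q. rewrite pow_i by lia. rewrite Rplus_0_r, pow1.
    rewrite Hj1. lra. }
  assert (Gal : 0 < g p k j al).
  { unfold g. fold q. rewrite Hj1.
    set (A := al ^ q). set (B := (1 + al) ^ q).
    pose proof (poly_bound q al ltac:(lra)) as PB.
    replace (al + 1) with (1 + al) in PB by ring. fold B in PB.
    replace (al ^ S q) with (al * A) in PB by (unfold A; simpl; ring).
    assert (HB1 : B * (2 * INR j - 1) <= 2 * INR j * A).
    { assert (HB2 : INR q * (B * (2 * INR j - 1)) <= INR q * (2 * INR j * A)).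
      { replace (INR q * (B * (2 * INR j - 1))) with (B * (al - INR q)) by (unfold al; ring).
        replace (INR q * (2 * INR j * A)) with (al * A) by (unfold al; ring). exact PB. }
      apply Rmult_le_reg_l with (INR q); lra. }
    assert (HA2 : al ^ 2 <= A) by (unfold A; apply Rle_pow; [lra| unfold q; lia]).
    assert (HA0 : 0 <= A) by (pose proof (pow2_ge_0 al); lra).
    assert (HB0 : 0 <= B) by (unfold B; apply pow_le; lra).
    assert (Hmain : INR j * A - (INR j - 1) * B >= A / 2).
    { assert (H1 : (INR j - 1) * (B * (2 * INR j - 1)) <= (INR j - 1) * (2 * INR j * A))
        by (apply Rmult_le_compat_l; lra).
      assert (H2 : (2*INR j - 1) * (INR j * A - (INR j - 1) * B - A/2) >= 0).
      { replace ((2*INR j - 1) * (INR j * A - (INR j - 1) * B - A/2)) with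
          (((INR j - 1) * (2 * INR j * A) - (INR j - 1) * (B * (2 * INR j - 1))) + A/2) by field.
        lra. }
      destruct (Rle_dec (INR j * A - (INR j - 1) * B - A/2) 0) as [H3|H3]; [|lra].
      assert (H4 : (2*INR j - 1) * (INR j * A - (INR j - 1) * B - A/2) <= 0).
      { replace 0 with ((2*INR j - 1) * 0) by ring. apply Rmult_le_compat_l; lra. }
      nra. }
    assert (Hal2 : al ^ 2 = 4 * (INR q * INR q) * (INR j * INR j)) by (unfold al; ring).
    assert (Hqq : 4 <= INR q * INR q) by nra.
    assert (Hjj : 0 <= INR j * INR j) by nra.
    assert (16 * (INR j * INR j) <= al ^ 2) by (rewrite Hal2; nra).
    lra. }
  destruct (IVT (g p k j) 0 al (cont_g p k j) ltac:(lra) G0 Gal) as [z [Hz Hgz]].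
  assert (z <> 0) by (intro; subst; lra).
  assert (a <= z) by (apply Hmin; [lra| exact Hgz]).
  unfold al in *. lra.
Qed.

Lemma sum_mono f h k : (forall j, (1 <= j <= k)%nat -> h j <= f j) ->
  sum_1_to h k <= sum_1_to f k.
Proof.
  induction k as [|k IH]; intro H; simpl.
  - lra.
  - assert (sum_1_to h k <= sum_1_to f k) by (apply IH; intros; apply H; lia).
    assert (h (S k) <= f (S k)) by (apply H; lia). lra.
Qed.

Lemma sum_scal c f k : sum_1_to (fun j => c * f j) k = c * sum_1_to f k.
Proof. induction k; simpl; [ring| rewrite IHk; ring]. Qed.

Definition hh (m : nat) (j : nat) : R := if (m <=? j)%nat then / INR j else 0.

Lemma hh_nonneg m k : (1 <= m)%nat -> 0 <= sum_1_to (hh m) k.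
Proof.
  intro Hm. induction k; simpl; [lra|].
  assert (0 <= hh m (S k)); [|lra].
  unfold hh. destruct (m <=? S k)%nat eqn:E.
  - assert (0 < / INR (S k)) by (apply Rinv_0_lt_compat; rewrite S_INR; pose proof (pos_INR k); lra). lra.
  - lra.
Qed.

Lemma harm m k : (1 <= m)%nat -> (m <= k + 1)%nat ->
  ln (INR k + 1) - ln (INR m) <= sum_1_to (hh m) k.
Proof.
  intros Hm. induction k as [|k IH]; intro Hmk.
  - assert (m = 1%nat) by lia. subst. simpl. replace (0+1) with 1 by ring. rewrite ln_1. lra.
  - simpl sum_1_to. destruct (Nat.eq_dec m (S k + 1)) as [E|E].
    + subst m. pose proof (hh_nonneg (S k + 1) k Hm).
      unfold hh at 2. replace (S k + 1 <=? S k)%nat with false by (symmetry; apply Nat.leb_gt; lia).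
      rewrite plus_INR. simpl (INR 1). lra.
    + assert (IH' := IH ltac:(lia)).
      unfold hh at 2. replace (m <=? S k)%nat with true by (symmetry; apply Nat.leb_le; lia).
      pose proof (ln_step (INR k + 1) ltac:(pose proof (pos_INR k); lra)).
      rewrite S_INR. lra.
Qed.

Theorem mainTheorem9 (p : nat) (hp : (3 <= p)%nat) (a : nat -> nat -> R)
  (ha : forall k j : nat, (1 <= k)%nat -> (1 <= j <= k)%nat ->
          is_smallest_pos_root (g p k j) (a k j)) :
  cv_infty (fun k : nat => sum_1_to (fun j : nat => / a k j) k).
Proof.
  intro M.
  set (q := (p-1)%nat).
  assert (Hq : 2 <= INR q) by (replace 2 with (INR 2) by (simpl; lra); apply le_INR; unfold q; lia).
  destruct (INR_unbounded (exp (4 * INR q * M + ln 2))) as [N0 HN0].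
  exists (S N0). intros k Hk.
  set (m := S (Nat.sqrt k)).
  pose proof (Nat.sqrt_spec' k) as Hs. fold m in Hs.
  assert (Hm1 : (1 <= m)%nat) by (unfold m; lia).
  assert (Hmk : (m <= k + 1)%nat) by (unfold m in *; nia).
  assert (Hm2 : (m * m <= 2 * (k + 1))%nat) by (unfold m in *; nia).
  assert (Hsum : / (2 * INR q) * sum_1_to (hh m) k <= sum_1_to (fun j => / a k j) k).
  { rewrite <- sum_scal. apply sum_mono. intros j Hj.
    pose proof (ha k j ltac:(lia) Hj) as Hr.
    unfold hh. destruct (m <=? j)%nat eqn:E.
    - apply Nat.leb_le in E.
      assert (Hb := root_bound p k j (a k j) hp Hj ltac:(nia) Hr). fold q in Hb.
      destruct Hr as [Ha _].
      assert (HjR : 1 <= INR j) by (replace 1 with (INR 1) by (simpl; lra); apply le_INR; lia).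
      replace (/ (2 * INR q) * / INR j) with (/ (2 * INR q * INR j)) by (field; lra).
      apply Rinv_le_contravar; lra.
    - destruct Hr as [Ha _]. pose proof (Rinv_0_lt_compat _ Ha). lra. }
  pose proof (harm m k Hm1 Hmk) as Hh.
  assert (Hk1 : 0 < INR k + 1) by (pose proof (pos_INR k); lra).
  assert (HmR : 0 < INR m) by (apply lt_0_INR; lia).
  assert (Hln : 2 * ln (INR m) <= ln 2 + ln (INR k + 1)).
  { rewrite <- ln_mult by lra.
    replace (2 * ln (INR m)) with (ln (INR m * INR m)) by (rewrite ln_mult by lra; ring).
    destruct (Rle_lt_or_eq_dec (INR m * INR m) (2 * (INR k + 1))) as [H|H].
    - rewrite <- mult_INR. replace (2 * (INR k + 1)) with (INR (2 * (k+1))) by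
        (rewrite mult_INR, plus_INR; simpl; ring). apply le_INR; exact Hm2.
    - left. apply ln_increasing; [nra|exact H].
    - rewrite H. lra. }
  assert (HkN : exp (4 * INR q * M + ln 2) < INR k + 1).
  { assert (INR N0 <= INR k) by (apply le_INR; lia). lra. }
  assert (Hlk : 4 * INR q * M + ln 2 < ln (INR k + 1)).
  { rewrite <- (ln_exp (4 * INR q * M + ln 2)) at 1. apply ln_increasing; [apply exp_pos| exact HkN]. }
  assert (Hfin : M < / (2 * INR q) * (ln (INR k + 1) - ln (INR m))).
  { apply Rmult_lt_reg_l with (2 * INR q); [lra|].
    rewrite <- Rmult_assoc, Rinv_r, Rmult_1_l by lra. nra. }
  assert (Hi : 0 < / (2 * INR q)) by (apply Rinv_0_lt_compat; lra).
  assert (/ (2 * INR q) * (ln (INR k + 1) - ln (INR m)) <= / (2 * INR q) * sum_1_to (hh m) k)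
    by (apply Rmult_le_compat_l; lra).
  lra.
Qed.
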